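(* Let $n\in\mathbb{N}$ and let $\sigma$ be a probability distribution on $[n]$ such that $\sigma_{\le i}>\tfrac in$ for every $i\in[n-1]$. Then the transition probabilities $P$ on $\mathbb{N}_0^{n-1}$ (defined in the context) admit the stationary distribution \[\pi=\bigotimes_{i=1}^{n-1}\mathrm{Geom}\Big(1-\frac{i}{n\,\sigma_{\le i}}\Big).\]
   Context: For a probability distribution $\sigma$ on $[n]$ write $\sigma_i=\Pr_{i^*\sim\sigma}[i^*=i]$ and $\sigma_{\le i}=\Pr_{i^*\sim\sigma}[i^*\le i]$. $\mathrm{Geom}(p)$ is the distribution of the number of failed independent Bernoulli($p$) trials before the first success (support $\mathbb{N}_0$), and $\bigotimes$ is the product of independent distributions. States are vectors $\vec d=(d_1,\dots,d_{n-1})\in\mathbb{N}_0^{n-1}$ (interpretation: $d_i$ is the number of elements strictly between the $i$-th and $(i+1)$-th smallest top-element of a MultiQueue with $n$ queues). Let $\vec e_i$ be the $i$-th unit vector for $i\in[n-1]$, and set the conventions $d_n=\infty$ and $\vec e_n=\vec 0$. The transition from a state $\vec d_{\mathrm{start}}$ to a state $\vec d_{\mathrm{end}}$ proceeds through transitional states $(\vec d,i)\in\mathbb{N}_0^{n-1}\times[n]$: (1) sample $i^*\sim\sigma$ and go to the transitional state $(\vec d_{\mathrm{start}},i^* )$. (2) While in a transitional state $(\vec d,i)$: if $d_i>0$, then with probability $(i-1)/i$ move to the transitional state $(\vec d-\vec e_i+\vec e_{i-1},i)$, and with probability $1/i$ end the transition in the state $\vec d_{\mathrm{end}}=\vec d-\vec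 e_i$; if $d_i=0$, move to the transitional state $(\vec d,i+1)$. $P(\vec d_{\mathrm{start}},\vec d_{\mathrm{end}})$ is the resulting probability of ending in $\vec d_{\mathrm{end}}$. A distribution $\pi$ is stationary if $\vec d_{\mathrm{start}}\sim\pi$ implies $\vec d_{\mathrm{end}}\sim\pi$. *)

(* Defs.v *)
From HB Require Import structures.
From mathcomp Require Import all_boot all_order all_algebra.
From mathcomp Require Import all_classical all_reals all_analysis.
Set Implicit Arguments. Unset Strict Implicit. Unset Printing Implicit Defensive.
Import Order.TTheory GRing.Theory Num.Theory.
Local Open Scope ring_scope.

(* States d = (d_1, ..., d_{n-1}) in N_0^{n-1}; d_i (1-based) is  d (i-1). *)
Definition state (n : nat) := {ffun 'I_n.-1 -> nat}.

(* d_i for 1-based i (only meaningful for 1 <= i <= n-1; d_n = oo is handled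
   separately in the transition). *)
Definition dval n (d : state n) (i : nat) : nat :=
  match i with
  | 0 => 0
  | j.+1 => if insub j is Some o then d o else 0
  end.

(* d + e_i  and  d - e_i  for 1-based i; with e_n = 0 (and the out-of-range
   e_0, which only ever appears with probability 0, also acting trivially). *)
Definition addE n (d : state n) (i : nat) : state n :=
  [ffun j : 'I_n.-1 => if (j.+1 == i)%N then (d j).+1 else d j].
Definition subE n (d : state n) (i : nat) : state n :=
  [ffun j : 'I_n.-1 => if (j.+1 == i)%N then (d j).-1 else d j].

(* absorb k d i e = probability that the transition process started in the
   transitional state (d,i) ends in the state e within at most k steps. *)
Fixpoint absorb (R : realType) (n k : nat) (d : state n) (i : nat) (e : state n)
  {struct k} : R :=
  match k with
  | 0 => 0
  | k'.+1 =>
    if (n <= i)%N || (0 < dval d i)%N then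
      (i.-1%:R / i%:R) * absorb R k' (addE (subE d i) i.-1) i e
      + (1 / i%:R) * (subE d i == e)%:R
    else absorb R k' d i.+1 e
  end.

(* P(d_start, d_end): probability of ending in d_end, i.e. the limit of the
   probability of having ended in d_end within k steps (first step: i* ~ sigma). *)
Definition trans_prob (R : realType) n (sigma : 'I_n -> R) (ds de : state n) : R :=
  limn (fun k : nat => \sum_(j < n) sigma j * absorb R k ds j.+1 de).

Definition sigma_le (R : realType) n (sigma : 'I_n -> R) (i : nat) : R :=
  \sum_(j < n | (j < i)%N) sigma j.

Definition geom_pmf (R : realType) (p : R) (k : nat) : R := (1 - p) ^+ k * p.

Definition pi_dist (R : realType) n (sigma : 'I_n -> R) (d : state n) : R :=
  \prod_(j < n.-1)
     geom_pmf (1 - (j.+1)%:R / (n%:R * sigma_le sigma j.+1)) (d j).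

Definition is_distribution (R : realType) n (p : state n -> R) : Prop :=
  (forall d, 0 <= p d) /\ (\esum_(d in [set: state n]) (p d)%:E = 1%E).

Definition is_stationary (R : realType) n (sigma : 'I_n -> R)
  (p : state n -> R) : Prop :=
  is_distribution p /\
  forall de : state n,
    \esum_(ds in [set: state n]) (p ds * trans_prob sigma ds de)%:E = (p de)%:E.

(* Main.v *)
Require Import Defs.
From HB Require Import structures.
From mathcomp Require Import all_boot all_order all_algebra.
From mathcomp Require Import all_classical all_reals all_analysis.
From mathcomp Require Import zify ring lra.
Import Order.TTheory GRing.Theory Num.Theory.
Import numFieldNormedType.Exports.
Local Open Scope classical_set_scope.
Local Open Scope ring_scope.

Section Absorb.
Variables (R : realType) (n : nat).

Definition rr (i : nat) : R := i.-1%:R / i%:R.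

Lemma rr_ge0 i : 0 <= rr i.
Proof. by rewrite /rr divr_ge0. Qed.

Lemma rr_sum i : rr i + 1 / i%:R <= 1.
Proof.
rewrite /rr; case: i => [|i]; first by rewrite /= !(invr0, mulr0, add0r).
by rewrite -mulrDl /= natr1 divff.
Qed.

Lemma absorb_ge0 k (d : state n) i e : 0 <= absorb R k d i e.
Proof.
elim: k d i => [|k IH] d i /=; first by [].
case: ifP => _; last exact: IH.
apply: addr_ge0; apply: mulr_ge0 => //; try exact: IH; exact: rr_ge0.
Qed.

Lemma absorb_le1 k (d : state n) i e : absorb R k d i e <= 1.
Proof.
elim: k d i => [|k IH] d i /=; first by [].
case: ifP => _; last exact: IH.
apply: le_trans (rr_sum i).
apply: lerD.
- rewrite -[X in _ <= X]mulr1; apply: ler_wpM2l; [exact: rr_ge0| exact: IH].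
- rewrite -[X in _ <= X]mulr1; apply: ler_wpM2l; first by rewrite divr_ge0.
  by case: (_ == _).
Qed.

Lemma absorb_mono k (d : state n) i e : absorb R k d i e <= absorb R k.+1 d i e.
Proof.
elim: k d i => [|k IH] d i; first by rewrite [X in X <= _]/= ; apply: absorb_ge0.
rewrite [X in X <= _]/= [X in _ <= X]/=.
case: ifP => _; last exact: IH.
apply: lerD => //; apply: ler_wpM2l; [exact: rr_ge0| exact: IH].
Qed.

Lemma absorb_cvg (d : state n) i e : cvgn (fun k => absorb R k d i e).
Proof.
apply/cvg_ex; eexists; apply: nondecreasing_cvgn.
  apply/nondecreasing_seqP => k; exact: absorb_mono.
exists 1 => _ [k _ <-]; exact: absorb_le1.
Qed.

Definition FF (d : state n) i e : R := limn (fun k => absorb R k d i e).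

Lemma FF_ge0 d i e : 0 <= FF d i e.
Proof. apply: limr_ge; first exact: absorb_cvg. by near=> k; apply: absorb_ge0.
Unshelve. all: by end_near. Qed.

Lemma FF_le1 d i e : FF d i e <= 1.
Proof. apply: limr_le; first exact: absorb_cvg. by near=> k; apply: absorb_le1.
Unshelve. all: by end_near. Qed.

Lemma FF_rec d i e : FF d i e =
  if (n <= i)%N || (0 < dval d i)%N then
      rr i * FF (addE (subE d i) i.-1) i e + (1 / i%:R) * (subE d i == e)%:R
  else FF d i.+1 e.
Proof.
rewrite /FF.
have -> : limn (fun k => absorb R k d i e) = limn (fun k => absorb R k.+1 d i e).
  apply/esym/cvg_lim => //.
  rewrite (cvg_shiftS (fun k => absorb R k d i e)); exact: absorb_cvg.
rewrite /=; case: ifP => _; apply: cvg_lim => //.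
- apply: cvgD; last exact: cvg_cst.
  apply: cvgMl_tmp; exact: absorb_cvg.
- exact: absorb_cvg.
Qed.

Lemma cvg_bigsum (I : Type) (s : seq I) (f : I -> nat -> R) (l : I -> R) :
  (forall i, f i @ \oo --> l i) ->
  (fun k => \sum_(i <- s) f i k) @ \oo --> \sum_(i <- s) l i.
Proof.
move=> Hf; elim: s => [|x s IH].
  have -> : (fun k => \sum_(i <- [::]) f i k) = fun=> 0.
    by apply/funext => k; rewrite big_nil.
  rewrite big_nil; exact: cvg_cst.
have -> : (fun k => \sum_(i <- x :: s) f i k) =
   (fun k => f x k) + (fun k => \sum_(i <- s) f i k).
  by apply/funext => k; rewrite big_cons.
rewrite big_cons; exact: cvgD.
Qed.

Lemma trans_probE (sigma : 'I_n -> R) ds de :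
  trans_prob sigma ds de = \sum_(j < n) sigma j * FF ds j.+1 de.
Proof.
rewrite /trans_prob; apply: cvg_lim => //.
have := (@cvg_bigsum _ (index_enum 'I_n) (fun j k => sigma j * absorb R k ds j.+1 de) (fun j => sigma j * FF ds j.+1 de)).
apply => j.
apply: cvgMl_tmp; exact: absorb_cvg.
Qed.

End Absorb.

Section StateLemmas.
Variable n : nat.
Implicit Types (d : state n).

Lemma dvalS d (o : 'I_n.-1) : dval d o.+1 = d o.
Proof. by rewrite /dval valK. Qed.

Lemma dval0 d k : ~~ (0 < k < n)%N -> dval d k = 0%N.
Proof.
case: k => [|k] //= Hk; rewrite insubF //.
apply/negbTE; move: Hk; apply: contra => /= H; lia.
Qed.

Lemma dval_case k : {o : 'I_n.-1 | k = o.+1} + {~~ (0 < k < n)%N}.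
Proof.
case: (boolP (0 < k < n)%N) => H; last by right.
left; have Hk : (k.-1 < n.-1)%N by lia.
exists (Ordinal Hk) => /=; lia.
Qed.

Lemma state_ext d1 d2 : (forall k, dval d1 k = dval d2 k) -> d1 = d2.
Proof. by move=> H; apply/ffunP => o; rewrite -!dvalS H. Qed.

Lemma dval_sub d i k :
  dval (subE d i) k = if k == i then (dval d k).-1 else dval d k.
Proof.
case: (dval_case k) => [[j ->]|Hk]; last by rewrite !dval0 //; case: ifP.
by rewrite !dvalS /subE ffunE.
Qed.

Lemma dval_add d i k :
  dval (addE d i) k = if (k == i) && (0 < k < n)%N then (dval d k).+1 else dval d k.
Proof.
case: (dval_case k) => [[j ->]|Hk]; last by rewrite !dval0 // (negbTE Hk) andbF.
rewrite !dvalS /addE ffunE; have -> : (0 < j.+1 < n)%N by move: (ltn_ord j); lia.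
by rewrite andbT.
Qed.

Lemma addEK d i : subE (addE d i) i = d.
Proof.
apply: state_ext => k; rewrite dval_sub dval_add.
case: (eqVneq k i) => [->|Hne].
  case: ifP => // /negbT Hc; by rewrite dval0.
by [].
Qed.

Lemma dval_range d i : (0 < dval d i)%N -> (0 < i < n)%N.
Proof. by apply: contraTT => H; rewrite dval0. Qed.

Lemma subEK d i : (0 < dval d i)%N -> addE (subE d i) i = d.
Proof.
move=> H; have Hr : (0 < i < n)%N by apply: (dval_range d).

apply: state_ext => k; rewrite dval_add dval_sub.
case: (eqVneq k i) => [->|Hne] /=; last by [].
by rewrite Hr prednK.
Qed.

End StateLemmas.
Section EsumLemmas.
Variable R : realType.
Local Open Scope ereal_scope.

Lemma esumZl (T : choiceType) (A : set T) (c : R) (a : T -> \bar R) :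
  (0 <= c)%R -> (forall x, A x -> 0 <= a x) ->
  \esum_(x in A) (c%:E * a x) = c%:E * \esum_(x in A) a x.
Proof.
move=> c0 a0; rewrite /esum -ereal_supZl //; last first.
  by apply/set0P; exists 0; exists set0; [exact: fsets_set0 | rewrite fsbig_set0].
congr ereal_sup; apply/seteqP; split => x /=.
- move=> [X HX <-]; exists (\sum_(i \in X) a i); first by exists X.
  case: HX => finX XA.
  rewrite !fsbig_finite // big_seq [in RHS]big_seq ge0_sume_distrr // => i.
  by move=> Hi; apply: a0; apply: XA; move: Hi; rewrite in_fset_set // inE.
- move=> [y [X HX <-] <-]; exists X => //.
  case: HX => finX XA.
  rewrite !fsbig_finite // big_seq [in RHS]big_seq ge0_sume_distrr // => i.
  by move=> Hi; apply: a0; apply: XA; move: Hi; rewrite in_fset_set // inE.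
Qed.

Lemma esum_prod_ffun (m : nat) (w : 'I_m -> nat -> R) :
  (forall i k, (0 <= w i k)%R) ->
  (forall i, \esum_(k in [set: nat]) (w i k)%:E = 1) ->
  \esum_(f in [set: {ffun 'I_m -> nat}]) (\prod_(i < m) w i (f i))%:E = 1.
Proof.
elim: m w => [|m IH] w w0 w1.
  have -> : [set: {ffun 'I_0 -> nat}] = [set [ffun i => 0%N]].
    apply/seteqP; split => f //= _; apply/ffunP => -[i Hi] //.
  by rewrite esum_set1 big_ord0 // lee_fin.
pose e (p : nat * {ffun 'I_m -> nat}) : {ffun 'I_m.+1 -> nat} :=
  [ffun i => if unlift ord0 i is Some j then p.2 j else p.1].
rewrite (reindex_esum [set: nat * {ffun 'I_m -> nat}] _ e); last first.
  split.
  - by move=> p.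
  - move=> [k1 f1] [k2 f2] _ _ /= /ffunP H.
    have H0 := H ord0; rewrite !ffunE unlift_none /= in H0.
    congr pair => //; apply/ffunP => j; have := H (lift ord0 j).
    by rewrite !ffunE liftK.
  - move=> g _; exists (g ord0, [ffun j => g (lift ord0 j)]) => //.
    apply/ffunP => i; rewrite ffunE; case: unliftP => [j ->|->] //=.
    by rewrite ffunE.
have -> : [set: nat * {ffun 'I_m -> nat}] = [set: nat] `*`` (fun=> [set: {ffun 'I_m -> nat}]).
  by apply/seteqP; split.
rewrite -(@esum_esum _ _ _ _ _ (fun k f => (\prod_(i < m.+1) w i (e (k, f) i))%:E)); last first.
  by move=> *; rewrite lee_fin prodr_ge0.
transitivity (\esum_(k in [set: nat]) (w ord0 k)%:E); last exact: w1.
apply: eq_esum => k _.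
transitivity (\esum_(f in [set: {ffun 'I_m -> nat}])
   ((w ord0 k)%:E * (\prod_(i < m) w (lift ord0 i) (f i))%:E)).
  apply: eq_esum => f _; rewrite big_ord_recl -EFinM !ffunE unlift_none /=.
  by congr (_ * _)%:E; apply: eq_bigr => i _; rewrite ffunE liftK.
rewrite esumZl //; last by move=> *; rewrite lee_fin prodr_ge0.
by rewrite (IH (fun i => w (lift ord0 i))) ?mule1.
Qed.

Lemma esum_geom (q : R) : (0 <= q)%R -> (q < 1)%R ->
  \esum_(k in [set: nat]) (q ^+ k * (1 - q))%:E = 1.
Proof.
move=> q0 q1.
rewrite -nneseries_esumT; last by move=> k; rewrite lee_fin mulr_ge0 ?exprn_ge0 // subr_ge0 ltW.
apply: cvg_lim => //.
have -> : (fun N => \sum_(0 <= k < N) (q ^+ k * (1 - q))%:E) =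
          EFin \o series (geometric (1 - q) q).
  apply/funext => N /=; rewrite sumEFin /series /=; congr EFin.
  by apply: eq_bigr => k _; rewrite mulrC.
have H := @cvg_geometric_series R (1 - q) q.
have Hq : (`|q| < 1)%R by rewrite ger0_norm.
have -> : 1 = ((1 - q) * (1 - q)^-1)%:E :> \bar R by rewrite divff // subr_eq0 gt_eqF.
exact: (cvg_comp _ _ (H Hq)).
Qed.

End EsumLemmas.

Section Main.
Variables (R : realType) (n : nat) (sigma : 'I_n -> R).
Hypothesis sigma_ge0 : forall j, 0 <= sigma j.
Hypothesis sigma_sum1 : \sum_(j < n) sigma j = 1.
Hypothesis hyp : forall i : nat, (0 < i < n)%N -> i%:R / n%:R < sigma_le sigma i.

Let s i := sigma_le sigma i.
Let q (i : nat) : R := i%:R / (n%:R * s i).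

Lemma n_gt0 : (0 < n)%N.
Proof.
case: n sigma sigma_sum1 => [|m] sg H //.
by move: H; rewrite big_ord0 => /eqP; rewrite eq_sym oner_eq0.
Qed.

Lemma s0 : s 0 = 0.
Proof. by rewrite /s /sigma_le big_pred0. Qed.

Lemma sn : s n = 1.
Proof. by rewrite /s /sigma_le -sigma_sum1; apply: eq_bigl => j; rewrite ltn_ord. Qed.

Lemma sS (j : 'I_n) : s j.+1 = s j + sigma j.
Proof.
rewrite /s /sigma_le (bigD1 j) //= addrC; congr (_ + _).
by apply: eq_bigl => i; rewrite ltnS ltn_neqAle andbC.
Qed.

Lemma s_ge0 i : 0 <= s i.
Proof. by rewrite /s /sigma_le sumr_ge0. Qed.

Lemma s_gt0 i : (0 < i < n)%N -> 0 < s i.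
Proof.
move=> H; apply: (@lt_trans _ _ (i%:R / n%:R)); last exact: hyp.
rewrite divr_gt0 // ltr0n; lia.
Qed.

Lemma q_gt0 i : (0 < i < n)%N -> 0 < q i.
Proof.
move=> H; rewrite /q divr_gt0 //; first by rewrite ltr0n; lia.
by rewrite mulr_gt0 ?s_gt0 // ltr0n; lia.
Qed.

Lemma q_lt1 i : (0 < i < n)%N -> q i < 1.
Proof.
move=> H; have := hyp i H; have n0 : (0:R) < n%:R by rewrite ltr0n n_gt0.
rewrite /q ltr_pdivrMr // => Hs.
by rewrite ltr_pdivrMr ?mulr_gt0 ?s_gt0 // mul1r mulrC.
Qed.

Lemma qn : q n = 1.
Proof. by rewrite /q sn mulr1 divff // pnatr_eq0 -lt0n n_gt0. Qed.

Let pi := pi_dist sigma.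
Implicit Types (d e : state n).

Lemma q_ord (j : 'I_n.-1) : 0 < q j.+1 < 1.
Proof.
have H : (0 < j.+1 < n)%N by move: (ltn_ord j); lia.
by rewrite q_gt0 ?q_lt1.
Qed.

Lemma pi_ge0 d : 0 <= pi d.
Proof.
rewrite /pi /pi_dist; apply: prodr_ge0 => j _; rewrite /geom_pmf.
have /andP[H1 H2] := q_ord j.
have -> : 1 - (1 - q j.+1) = q j.+1 by ring.
by rewrite mulr_ge0 ?exprn_ge0 ?subr_ge0 ?ltW.
Qed.

Lemma pi_add d i : (0 < i < n)%N -> pi (addE d i) = pi d * q i.
Proof.
move=> Hi; case: (dval_case n i) => [[j Ej]|Hn]; last by rewrite Hi in Hn.
subst i; rewrite /pi /pi_dist (bigD1 j) //= [in RHS](bigD1 j) //=.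
rewrite [in X in X * _ = _]/addE ffunE eqxx.
have -> : \prod_(k < n.-1 | k != j)
     geom_pmf (1 - (k.+1)%:R / (n%:R * sigma_le sigma k.+1)) (addE d j.+1 k) =
   \prod_(k < n.-1 | k != j)
     geom_pmf (1 - (k.+1)%:R / (n%:R * sigma_le sigma k.+1)) (d k).
  apply: eq_bigr => k Hk; rewrite /addE ffunE.
  by have -> : (k.+1 == j.+1) = false by apply/negbTE.
rewrite /geom_pmf exprS /q /s; ring.
Qed.

Lemma pi_sum : \esum_(d in [set: state n]) (pi d)%:E = 1%E.
Proof.
rewrite /pi /pi_dist /state.
apply: (@esum_prod_ffun R _ (fun (j : 'I_n.-1) k => geom_pmf (1 - (j.+1)%:R / (n%:R * sigma_le sigma j.+1)) k)).
  move=> j k; rewrite /geom_pmf; have /andP[H1 H2] := q_ord j.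
  have -> : 1 - (1 - q j.+1) = q j.+1 by ring.
  by rewrite mulr_ge0 ?exprn_ge0 ?subr_ge0 ?ltW.
move=> j; rewrite /geom_pmf; have /andP[H1 H2] := q_ord j.
have -> : 1 - (1 - q j.+1) = q j.+1 by ring.
exact: esum_geom (ltW H1) H2.
Qed.

Lemma subE_out d i : ~~ (0 < i < n)%N -> subE d i = d.
Proof.
move=> H; apply: state_ext => k; rewrite dval_sub.
by case: (eqVneq k i) => [->|] //; rewrite dval0.
Qed.

Lemma addE_out d i : ~~ (0 < i < n)%N -> addE d i = d.
Proof.
move=> H; apply: state_ext => k; rewrite dval_add.
by case: (eqVneq k i) => [->|] //=; rewrite (negbTE H).
Qed.

Definition Cset j : set (state n) := [set d | (n <= j)%N || (0 < dval d j)%N].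
Definition shift j (d : state n) := addE (subE d j) j.-1.
Definition GG (e : state n) j d := FF R n d j e.

Lemma C_addsub d j : (j <= n)%N -> Cset j d -> addE (subE d j) j = d.
Proof.
rewrite /Cset /= => Hj /orP[H|H]; last exact: subEK.
have Hn : ~~ (0 < j < n)%N by apply/negP => /andP[_]; rewrite ltnNge H.
by rewrite addE_out // subE_out.
Qed.

Lemma GG_rec_C e j d : Cset j d ->
  GG e j d = rr R j * GG e j (shift j d) + 1 / j%:R * (subE d j == e)%:R.
Proof. by rewrite /Cset /= => H; rewrite /GG FF_rec H. Qed.

Lemma GG_rec_0 e j d : (j < n)%N -> dval d j = 0%N -> GG e j d = GG e j.+1 d.
Proof.
move=> Hj H0; rewrite /GG FF_rec H0 /=.
by have -> : (n <= j)%N = false by apply/negbTE; rewrite -ltnNge.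
Qed.

Lemma GG_ge0 e j d : 0 <= GG e j d.
Proof. exact: FF_ge0. Qed.

Lemma GG_le1 e j d : GG e j d <= 1.
Proof. exact: FF_le1. Qed.

Lemma piG_ge0 e j d (d' : state n) : (0 <= (pi d * GG e j d')%:E)%E.
Proof. by rewrite lee_fin mulr_ge0 ?pi_ge0 ?GG_ge0. Qed.

Lemma piG_le e j d (d' : state n) : pi d * GG e j d' <= pi d.
Proof. by rewrite -[X in _ <= X]mulr1 ler_wpM2l ?pi_ge0 ?GG_le1. Qed.

Lemma fin_esum (A : set (state n)) (f : state n -> R) :
  (forall d, 0 <= f d <= pi d) ->
  \esum_(d in A) (f d)%:E \is a fin_num.
Proof.
move=> Hf; rewrite ge0_fin_numE; last first.
  by apply: esum_ge0 => d _; rewrite lee_fin; case/andP: (Hf d).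
apply: (@le_lt_trans _ _ 1%E); last by rewrite ltry.
rewrite -pi_sum esum_mkcond; apply: le_esum => d _.
case: ifP => _; last by rewrite lee_fin pi_ge0.
by rewrite lee_fin; case/andP: (Hf d).
Qed.

Local Open Scope ereal_scope.

Definition EP e j := \esum_(d in [set: state n]) (pi d * GG e j d)%:E.
Definition EY e j := \esum_(d in [set d : state n | dval d j = 0%N]) (pi d * GG e j.+1 d)%:E.
Definition EZ e j := \esum_(d in Cset j) (pi d * GG e j d)%:E.
Definition EX e j := \esum_(d in Cset j) (pi d * GG e j (shift j d))%:E.
Definition EW e j := \esum_(d in [set d : state n | (0 < dval d j.-1)%N]) (pi d * GG e j d)%:E.

Lemma eqC e j : (0 < j < n)%N -> EP e j = EY e j + EZ e j.
Proof.
move=> Hj; rewrite /EP (esumID [set d : state n | dval d j = 0%N]); last by move=> *; exact: piG_ge0.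
rewrite setTI; congr (_ + _).
  apply: eq_esum => d /= Hd; rewrite GG_rec_0 //; by case/andP: Hj.
rewrite /EZ; congr esum; apply/seteqP; split => d /=; rewrite /Cset /=.
  by move=> [_ H]; apply/orP; right; rewrite lt0n; apply/eqP.
move=> /orP[H|H]; first by exfalso; move: Hj H; lia.
by split => // E; rewrite E in H.
Qed.

Lemma eqCn e : EP e n = EZ e n.
Proof.
rewrite /EP /EZ; congr esum; apply/seteqP; split => d //= _.
by rewrite /Cset /= leqnn.
Qed.

Lemma pi_addq e j : (0 < j <= n)%N -> pi (addE e j) = (pi e * q j)%R.
Proof.
move=> Hj; case: (ltnP j n) => Hjn; first by rewrite pi_add //; lia.
have -> : j = n by lia.
by rewrite addE_out ?qn ?mulr1 //; apply/negP => /andP[_]; rewrite ltnn.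
Qed.

Lemma C_add e j : (0 < j <= n)%N -> Cset j (addE e j).
Proof.
move=> Hj; rewrite /Cset /=; case: (ltnP j n) => Hjn //=.
rewrite dval_add eqxx /=; have -> : (0 < j < n)%N by lia.
by [].
Qed.

Lemma esum_ind e j : (0 < j <= n)%N ->
  \esum_(d in Cset j) (pi d * (1 / j%:R * (subE d j == e)%:R))%:E =
  (pi e * q j / j%:R)%:E.
Proof.
move=> Hj; rewrite (esumID [set addE e j]); last first.
  by move=> d _; rewrite lee_fin mulr_ge0 ?pi_ge0 // mulr_ge0 // divr_ge0.
have -> : Cset j `&` [set addE e j] = [set addE e j].
  apply/seteqP; split => d /=; first by case.
  by move=> ->; split => //; exact: C_add.
rewrite esum_set1; last by rewrite lee_fin mulr_ge0 ?pi_ge0 // mulr_ge0 // divr_ge0.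
rewrite esum1 ?adde0; last first.
  move=> d [Cd Hne]; case: eqP => [E|_]; last by rewrite mulr0 mulr0.
  by exfalso; apply: Hne => /=; rewrite -E C_addsub //; case/andP: Hj.
by rewrite addEK eqxx mulr1 pi_addq // mul1r.
Qed.

Lemma eqA e j : (0 < j <= n)%N ->
  EZ e j = (rr R j)%:E * EX e j + (pi e * q j / j%:R)%:E.
Proof.
move=> Hj; rewrite /EZ /EX -esum_ind // -esumZl; last 2 first.
- exact: rr_ge0.
- by move=> *; exact: piG_ge0.
rewrite -esumD; last 2 first.
- by move=> *; rewrite lee_fin mulr_ge0 ?rr_ge0 // mulr_ge0 ?pi_ge0 ?GG_ge0.
- by move=> d _; rewrite lee_fin mulr_ge0 ?pi_ge0 // mulr_ge0 // divr_ge0.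
apply: eq_esum => d Cd; rewrite GG_rec_C //.
by rewrite -EFinM -EFinD; congr EFin; ring.
Qed.

Lemma pi_subq d j : (0 < j <= n)%N -> Cset j d -> pi d = (pi (subE d j) * q j)%R.
Proof.
move=> Hj Cd; rewrite -{1}(C_addsub _ _ _ Cd); last by case/andP: Hj.
exact: pi_addq.
Qed.

Lemma pi_shift d j : (1 < j <= n)%N -> Cset j d ->
  pi d = (q j / q j.-1 * pi (shift j d))%R.
Proof.
move=> Hj Cd.
have Hj1 : (0 < j.-1 < n)%N by lia.
have Hq : q j.-1 != 0%R by rewrite gt_eqF // q_gt0.
have Hj' : (0 < j <= n)%N by lia.
rewrite /shift pi_add // [in LHS](pi_subq _ _ Hj' Cd).
by field.
Qed.

Lemma shift_bij j : (1 < j <= n)%N ->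
  set_bij (Cset j) [set d : state n | (0 < dval d j.-1)%N] (shift j).
Proof.
move=> Hj; have Hj1 : (0 < j.-1 < n)%N by lia.
have Hne : (j.-1 == j) = false by apply/negbTE; lia.
split.
- move=> d Cd /=; rewrite /shift dval_add eqxx Hj1 /=; lia.
- move=> d1 d2 /set_mem C1 /set_mem C2 /= E.
  have Hjn : (j <= n)%N by lia.
  rewrite -(C_addsub _ _ Hjn C1) -(C_addsub _ _ Hjn C2).
  by rewrite -(addEK _ (subE d1 j) j.-1) -(addEK _ (subE d2 j) j.-1) -/(shift j d1) -/(shift j d2) E.
- move=> d' /= Hd'; exists (addE (subE d' j.-1) j).
    rewrite /Cset /=; case: (ltnP j n) => Hjn //=.
    by rewrite dval_add eqxx /=; have -> : (0 < j < n)%N by lia.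
  by rewrite /shift addEK subEK.
Qed.

Lemma q_pos j : (0 < j <= n)%N -> (0 < q j)%R.
Proof.
move=> Hj; case: (ltnP j n) => Hjn; first by apply: q_gt0; lia.
by rewrite (_ : j = n) ?qn //; lia.
Qed.

Lemma eqB e j : (1 < j <= n)%N -> EX e j = (q j / q j.-1)%:E * EW e j.
Proof.
move=> Hj; rewrite /EW (reindex_esum _ _ _ _ (shift_bij j Hj)) -esumZl; last 2 first.
- by rewrite divr_ge0 // ltW // q_pos //; lia.
- by move=> *; exact: piG_ge0.
apply: eq_esum => d Cd; rewrite (pi_shift _ _ Hj Cd) -EFinM; congr EFin; by rewrite mulrA.
Qed.

Lemma eqD e j : (1 < j <= n)%N -> EP e j = EY e j.-1 + EW e j.
Proof.
move=> Hj; rewrite /EP (esumID [set d : state n | dval d j.-1 = 0%N]); last by move=> *; exact: piG_ge0.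
rewrite setTI; congr (_ + _).
  have Hj0 : (0 < j)%N by lia.
  by rewrite /EY (prednK Hj0).
rewrite /EW; congr esum; apply/seteqP; split => d /=.
  by move=> [_ H]; rewrite lt0n; apply/eqP.
by move=> H; split => // E; rewrite E in H.
Qed.

Section Reals.
Variable e : state n.

Let p j := fine (EP e j).
Let y j := fine (EY e j).
Let z j := fine (EZ e j).
Let x j := fine (EX e j).
Let w j := fine (EW e j).

Lemma bnd_G j d (d' : state n) : (0 <= pi d * GG e j d' <= pi d)%R.
Proof. by rewrite piG_le andbT mulr_ge0 ?pi_ge0 ?GG_ge0. Qed.

Lemma EPr j : EP e j = (p j)%:E.
Proof. rewrite /p fineK; first by []. rewrite /EP; apply: fin_esum => d; exact: bnd_G. Qed.
Lemma EYr j : EY e j = (y j)%:E.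
Proof. rewrite /y fineK; first by []. rewrite /EY; apply: fin_esum => d; exact: bnd_G. Qed.
Lemma EZr j : EZ e j = (z j)%:E.
Proof. rewrite /z fineK; first by []. rewrite /EZ; apply: fin_esum => d; exact: bnd_G. Qed.
Lemma EXr j : EX e j = (x j)%:E.
Proof. rewrite /x fineK; first by []. rewrite /EX; apply: fin_esum => d; exact: bnd_G. Qed.
Lemma EWr j : EW e j = (w j)%:E.
Proof. rewrite /w fineK; first by []. rewrite /EW; apply: fin_esum => d; exact: bnd_G. Qed.

Local Close Scope ereal_scope.

Lemma rC j : (0 < j < n)%N -> p j = y j + z j.
Proof. by move=> Hj; have := eqC e j Hj; rewrite EPr EYr EZr -EFinD => -[]. Qed.

Lemma rCn : p n = z n.
Proof. by have := eqCn e; rewrite EPr EZr => -[]. Qed.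

Lemma rA j : (0 < j <= n)%N -> z j = rr R j * x j + pi e * q j / j%:R.
Proof. by move=> Hj; have := eqA e j Hj; rewrite EZr EXr -EFinM -EFinD => -[]. Qed.

Lemma rB j : (1 < j <= n)%N -> x j = q j / q j.-1 * w j.
Proof. by move=> Hj; have := eqB e j Hj; rewrite EXr EWr -EFinM => -[]. Qed.

Lemma rD j : (1 < j <= n)%N -> p j = y j.-1 + w j.
Proof. by move=> Hj; have := eqD e j Hj; rewrite EPr EYr EWr -EFinD => -[]. Qed.

Lemma s_pos j : (0 < j <= n)%N -> 0 < s j.
Proof.
move=> Hj; case: (ltnP j n) => Hjn; first by apply: s_gt0; lia.
by rewrite (_ : j = n) ?sn //; lia.
Qed.

Lemma kA j : (0 < j <= n)%N -> s j * (pi e * q j / j%:R) = pi e / n%:R.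
Proof.
move=> Hj; have Hs : s j != 0 by rewrite gt_eqF // s_pos.
have Hjr : j%:R != 0 :> R by rewrite pnatr_eq0 -lt0n; lia.
have Hn : n%:R != 0 :> R by rewrite pnatr_eq0 -lt0n; lia.
rewrite /q; field; by rewrite ?Hn ?Hjr ?Hs.
Qed.

Lemma kB j : (1 < j <= n)%N -> s j * rr R j * (q j / q j.-1) = s j.-1.
Proof.
move=> Hj; have Hs : s j != 0 by rewrite gt_eqF // s_pos //; lia.
have Hs1 : s j.-1 != 0 by rewrite gt_eqF // s_pos //; lia.
have Hjr : j%:R != 0 :> R by rewrite pnatr_eq0 -lt0n; lia.
have Hj1 : j.-1%:R != 0 :> R by rewrite pnatr_eq0 -lt0n; lia.
have Hn : n%:R != 0 :> R by rewrite pnatr_eq0 -lt0n; lia.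
rewrite /q /rr; field; by rewrite ?Hn ?Hjr ?Hs ?Hs1 ?Hj1.
Qed.

Lemma hZ j : (0 < j <= n)%N -> s j * z j = s j.-1 * w j + pi e / n%:R.
Proof.
move=> Hj; rewrite rA // mulrDr kA //.
case: (ltnP 1 j) => Hj1.
  have Hj2 : (1 < j <= n)%N by lia.
  rewrite (rB j Hj2) -(kB j Hj2); ring.
have -> : j = 1%N by lia.
have -> : rr R 1 = 0 by rewrite /rr /= mul0r.
rewrite /= s0; ring.
Qed.

Lemma step j : (0 < j < n)%N ->
  (s j - s j.-1) * p j = s j * y j - s j.-1 * y j.-1 + pi e / n%:R.
Proof.
move=> Hj; rewrite mulrBl {1}rC // mulrDr hZ; last by lia.
case: (ltnP 1 j) => Hj1.
  rewrite rD; last by lia.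
  ring.
have -> : j = 1%N by lia.
rewrite s0 /=; ring.
Qed.

Lemma last_step : (s n - s n.-1) * p n = pi e / n%:R - s n.-1 * y n.-1.
Proof.
have Hn := n_gt0.
rewrite mulrBl {1}rCn sn mul1r.
have := hZ n; rewrite sn mul1r => ->; last by lia.
case: (ltnP 1 n) => Hn1.
  rewrite rD; last by lia.
  ring.
have -> : n = 1%N by lia.
rewrite s0 /=; ring.
Qed.

Lemma telescope m : (m <= n.-1)%N ->
  \sum_(j < m) (s j.+1 - s j) * p j.+1 = s m * y m + m%:R * (pi e / n%:R).
Proof.
elim: m => [|m IH] Hm; first by rewrite big_ord0 s0 !mul0r addr0.
rewrite big_ord_recr /= IH; last by lia.
have := step m.+1; rewrite /= => ->; last by lia.
rewrite -natr1; ring.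
Qed.

Lemma total : \sum_(j < n) sigma j * p j.+1 = pi e.
Proof.
have Hn := n_gt0.
have -> : \sum_(j < n) sigma j * p j.+1 = \sum_(j < n) (s j.+1 - s j) * p j.+1.
  by apply: eq_bigr => j _; rewrite sS addrC addKr.
rewrite -(prednK Hn) big_ord_recr /= telescope // prednK //.
have := last_step; rewrite /= => ->.
have Hnr : n%:R != 0 :> R by rewrite pnatr_eq0 -lt0n.
have E : (n.-1)%:R = n%:R - 1 :> R.
  by rewrite -{2}(prednK Hn) -natr1 addrK.
rewrite E; field; by rewrite ?Hnr.
Qed.

End Reals.

Lemma stationary : is_stationary sigma pi.
Proof.
split; first by split; [exact: pi_ge0 | exact: pi_sum].
move=> de.
transitivity (\esum_(ds in [set: state n])
   \sum_(j < n) ((sigma j)%:E * (pi ds * GG de j.+1 ds)%:E)).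
  apply: eq_esum => ds _; rewrite trans_probE mulr_sumr -sumEFin.
  apply: eq_bigr => j _; rewrite -EFinM; congr EFin; rewrite /GG; ring.
rewrite esum_sum; last first.
  move=> ds j _ _; apply: mule_ge0; first by rewrite lee_fin.
  exact: piG_ge0.
transitivity (\sum_(j < n) (sigma j * fine (EP de j.+1))%:E).
  apply: eq_bigr => j _; rewrite esumZl; last 2 first.
  - exact: sigma_ge0.
  - by move=> ds _; exact: piG_ge0.
  by rewrite -/(EP de j.+1) {1}(EPr de j.+1) -EFinM.
by rewrite sumEFin (total de).
Qed.

End Main.



Theorem theorem5 (R : realType) (n : nat) (sigma : 'I_n -> R)
  (sigma_ge0 : forall j, 0 <= sigma j)
  (sigma_sum1 : \sum_(j < n) sigma j = 1)
  (hyp : forall i : nat, (0 < i < n)%N -> i%:R / n%:R < sigma_le sigma i) :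
  is_stationary sigma (pi_dist sigma).
Proof.
exact: (@stationary R n sigma sigma_ge0 sigma_sum1 hyp).
Qed.
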